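(* Let $A\in\mathbb{R}^{n\times n}$, $B\in\mathbb{R}^{n\times m}$ with $(A,B)$ stabilizable, $Q\succ0$, $R\succ0$, $\alpha>1$, $\gamma,\eta\ge 0$, and let $\tilde F,\tilde P,V$ be as in the context. Consider $\dot x=Ax+Bu$, $x(0)=x_0$, under $u(t)=F_kx_k$ for $t\in[t_k,t_{k+1})$, $\delta_k=t_{k+1}-t_k$, $0=t_0<t_1<\cdots$. If for every $k$ the pair $(F_k,\delta_k)$ is a feasible solution of problem (P1) below (with the current state $x_k$), then the resulting control law is stabilizing and, for all nonzero $x_0$, $\nu(x_0)\le\alpha-1$. Problem (P1), for given $x_k$: minimize over $F_k\in\mathbb{R}^{m\times n}$, $\delta_k$ the objective $-\delta_k+\gamma\|F_k\|_0+\eta\|u_k\|_0$ with $u_k=F_kx_k$, subject to the dynamics with the held input $u(t)=F_kx_k$ and the constraint $J_k(F_k,\xi;x_k)\le\alpha\big(V(x_k)-V(x(t_k+\xi))\big)$ for all $\xi\in[0,\delta_k]$.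
   Context: $x_k:=x(t_k)$. $\tilde F\in\mathbb{R}^{m\times n}$ is a fixed gain with $A+B\tilde F$ Hurwitz, $\tilde P\succ0$ is the unique solution of $(A+B\tilde F)^T\tilde P+\tilde P(A+B\tilde F)+Q+\tilde F^TR\tilde F=0$, and $V(x):=x^T\tilde Px$. $\|M\|_0$ denotes the number of nonzero entries of a matrix or vector $M$. For $\xi\ge0$, $J_k(F_k,\xi;x_k):=\int_{t_k}^{t_k+\xi}(x^TQx+u^TRu)\,dt$ with $x$ the trajectory from $x(t_k)=x_k$ under the held input $u=F_kx_k$. $J(x_0):=\sum_{k\ge0}J_k(F_k,\delta_k;x_k)$, $\tilde J(x_0):=x_0^T\tilde Px_0$, $\nu(x_0):=(J(x_0)-\tilde J(x_0))/\tilde J(x_0)$. *)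

(* Defs.v *)
From HB Require Import structures.
From mathcomp Require Import all_boot all_order all_algebra.
From mathcomp Require Import all_classical all_reals all_analysis.
From mathcomp.real_closed Require Import complex.
Set Implicit Arguments. Unset Strict Implicit. Unset Printing Implicit Defensive.
Import Order.TTheory GRing.Theory Num.Theory.
Import numFieldNormedType.Exports.
Local Open Scope ring_scope.

Definition qf (R : realType) (n : nat) (M : 'M[R]_n) (x : 'cV[R]_n) : R :=
  (x^T *m M *m x) ord0 ord0.

Definition posdef (R : realType) (n : nat) (M : 'M[R]_n) : Prop :=
  M^T = M /\ forall x : 'cV[R]_n, x != 0 -> 0 < qf M x.

Definition hurwitz (R : realType) (n : nat) (M : 'M[R]_n) : Prop :=
  forall z : R[i], root (map_poly (fun r : R => (r +i* 0)%C) (char_poly M)) z ->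
    complex.Re z < 0.

Definition stabilizable (R : realType) (n m : nat)
  (A : 'M[R]_n) (B : 'M[R]_(n, m)) : Prop :=
  exists F : 'M[R]_(m, n), hurwitz (A + B *m F).

Definition Jk (R : realType) (n m : nat) (Q : 'M[R]_n) (Rw : 'M[R]_m)
  (x : R -> 'cV[R]_n) (u : 'cV[R]_m) (tk xi : R) : \bar R :=
  (\int[lebesgue_measure]_(s in `[tk%R, (tk + xi)%R]) (qf Q (x s) + qf Rw u)%:E)%E.

(* Feasibility of (P1) at step k: the decrease constraint for all xi in [0, delta_k].
   (The objective -delta_k + gamma ||F_k||_0 + eta ||u_k||_0 does not affect feasibility.) *)
Definition P1_feasible (R : realType) (n m : nat) (Q : 'M[R]_n) (Rw : 'M[R]_m)
  (P : 'M[R]_n) (alpha : R) (x : R -> 'cV[R]_n) (Fk : 'M[R]_(m, n))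
  (tk deltak : R) : Prop :=
  forall xi : R, 0 <= xi <= deltak ->
    (Jk Q Rw x (Fk *m x tk) tk xi <=
       (alpha * (qf P (x tk) - qf P (x (tk + xi))))%:E)%E.

Definition Jtot (R : realType) (n m : nat) (Q : 'M[R]_n) (Rw : 'M[R]_m)
  (x : R -> 'cV[R]_n) (F : nat -> 'M[R]_(m, n)) (t : nat -> R) : \bar R :=
  (\sum_(0 <= k <oo) Jk Q Rw x (F k *m x (t k)) (t k) (t k.+1 - t k))%E.

(* nu(x0) = (J(x0) - Jtilde(x0)) / Jtilde(x0), Jtilde(x0) = x0^T P x0 *)
Definition nu (R : realType) (n m : nat) (Q : 'M[R]_n) (Rw : 'M[R]_m)
  (P : 'M[R]_n) (x : R -> 'cV[R]_n) (F : nat -> 'M[R]_(m, n)) (t : nat -> R)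
  (x0 : 'cV[R]_n) : \bar R :=
  ((Jtot Q Rw x F t - (qf P x0)%:E) * ((qf P x0)^-1)%:E)%E.

(* Main.v *)
Require Import Defs.
From HB Require Import structures.
From mathcomp Require Import all_boot all_order all_algebra.
From mathcomp Require Import all_classical all_reals all_analysis.
From mathcomp.real_closed Require Import complex.
From mathcomp Require Import measurable_realfun.
From mathcomp Require Import ring lra.
Import Order.TTheory GRing.Theory Num.Theory.
Import numFieldNormedType.Exports.
Local Open Scope ring_scope.
Local Open Scope classical_set_scope.

Set Implicit Arguments. Unset Strict Implicit. Unset Printing Implicit Defensive.

Section Alg.
Variable R : realType.

Definition sq p (y : 'cV[R]_p) : R := \sum_i y i ord0 ^+ 2.

Lemma sq_ge0 p (y : 'cV[R]_p) : 0 <= sq y.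
Proof. by apply: sumr_ge0 => i _; rewrite sqr_ge0. Qed.

Lemma sq_term p (y : 'cV[R]_p) i : y i ord0 ^+ 2 <= sq y.
Proof.
rewrite /sq (bigD1 i) //= lerDl; apply: sumr_ge0 => j _; exact: sqr_ge0.
Qed.

Lemma qfE p (M : 'M[R]_p) y :
  qf M y = \sum_i \sum_j y i ord0 * M i j * y j ord0.
Proof.
rewrite /qf mxE exchange_big; apply: eq_bigr => j _; rewrite mxE big_distrl /=.
apply: eq_bigr => i _; by rewrite !mxE.
Qed.

Lemma mulvE p q (M : 'M[R]_(p, q)) (z : 'cV[R]_q) i :
  (M *m z) i ord0 = \sum_j M i j * z j ord0.
Proof. by rewrite mxE. Qed.

Lemma absprod_le (a b : R) : `|a| * `|b| <= a ^+ 2 + b ^+ 2.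
Proof.
rewrite -(real_normK (num_real a)) -(real_normK (num_real b)).
have := normr_ge0 a; have := normr_ge0 b.
set u := `|a|; set v := `|b| => h1 h2; nra.
Qed.

Lemma bil_bound p q (M : 'M[R]_(p, q)) (y : 'cV[R]_p) (z : 'cV[R]_q) :
  `|\sum_i y i ord0 * (M *m z) i ord0| <=
    (\sum_i \sum_j `|M i j|) * (sq y + sq z).
Proof.
apply: (le_trans (ler_norm_sum _ _ _)).
rewrite mulr_suml; apply: ler_sum => i _.
rewrite mulvE mulr_sumr big_distrl /=.
apply: (le_trans (ler_norm_sum _ _ _)); apply: ler_sum => j _.
rewrite mulrA normrM normrM [`|y i ord0| * _]mulrC -mulrA; apply: ler_wpM2l => //.
apply: (le_trans (absprod_le _ _)).
by apply: lerD; [exact: sq_term|exact: sq_term].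
Qed.

Lemma posdef_ge0 p (M : 'M[R]_p) y : posdef M -> 0 <= qf M y.
Proof.
move=> [_ H]; have [->|y0] := eqVneq y 0; last exact/ltW/H.
by rewrite /qf mulmx0 mxE.
Qed.

Lemma qfZ p (M : 'M[R]_p) (a : R) y : qf M (a *: y) = a ^+ 2 * qf M y.
Proof.
rewrite !qfE mulr_sumr; apply: eq_bigr => i _; rewrite mulr_sumr; apply: eq_bigr => j _.
rewrite !mxE; ring.
Qed.


Lemma cont_sum (T : topologicalType) k (G : 'I_k -> T -> R) :
  (forall i, continuous (G i)) -> continuous (fun r => \sum_i G i r).
Proof.
elim: k G => [|k IH] G HG.
  rewrite (_ : (fun r => _) = cst 0); first exact: cst_continuous.
  by apply/funext => r; rewrite big_ord0.
rewrite (_ : (fun r => _) = (fun r => \sum_(i < k) G (widen_ord (leqnSn k) i) r + G ord_max r)).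
  move=> r; apply: (@continuousD _ R^o T (fun r => \sum_(i < k) G (widen_ord (leqnSn k) i) r) (G ord_max) r).
    by apply: IH => i; exact: HG.
  exact: HG.
by apply/funext => r; rewrite big_ord_recr.
Qed.

Lemma cont_mul (T : topologicalType) (f g : T -> R) :
  continuous f -> continuous g -> continuous (fun r => f r * g r).
Proof. by move=> cf cg r; exact: (@continuousM R T f g r (cf r) (cg r)). Qed.

Lemma cont_add (T : topologicalType) (f g : T -> R) :
  continuous f -> continuous g -> continuous (fun r => f r + g r).
Proof. by move=> cf cg r; exact: (@continuousD _ R^o T f g r (cf r) (cg r)). Qed.

Lemma coercive p (M : 'M[R]_p) : posdef M ->
  exists K, 0 < K /\ forall y, sq y <= K * qf M y.
Proof.
move=> PM.
pose phi (v : 'rV[R]_p) := \sum_a \sum_b v ord0 a * M a b * v ord0 b.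
have phiE v : phi v = qf M v^T.
  by rewrite qfE; apply: eq_bigr => a _; apply: eq_bigr => b _; rewrite !mxE.
have cphi : continuous phi.
  apply: cont_sum => a; apply: cont_sum => b.
  apply: cont_mul; last exact: coord_continuous.
  apply: cont_mul; last exact: cst_continuous.
  exact: coord_continuous.
have Hi : forall i : 'I_p, exists c, 0 < c /\ forall y : 'cV[R]_p,
    y i ord0 = 1 -> (forall j, `|y j ord0| <= 1) -> c <= qf M y.
  move=> i.
  pose S := [set v : 'rV[R]_p | forall j,
    (fun j => `[(if j == i then 1 else -1), 1]%classic) j (v ord0 j)].
  have cS : compact S.
    by apply: (@rV_compact R p (fun j => `[(if j == i then 1 else -1), 1]%classic)) => j;
      exact: segment_compact.
  have S0 : S !=set0.
    exists (\row_j (if j == i then 1 else 0)) => j /=; rewrite mxE.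
    by case: eqP => _; rewrite in_itv /= ?lexx ?ler01 //= lerN10.
  have [c cS' cmin] := compact_EVT_min S0 cS (continuous_subspaceT cphi).
  exists (phi c); split.
    rewrite phiE; apply: PM.2; apply/eqP => c0.
    move: cS'; rewrite inE => /(_ i) /=; rewrite eqxx in_itv /=.
    have -> : c ord0 i = 0 by have := congr1 (fun w : 'cV[R]_p => w i ord0) c0; rewrite !mxE.
    by rewrite ler10.
  move=> y yi1 yb; rewrite -[y]trmxK -phiE; apply: cmin; rewrite inE => j /=.
  rewrite mxE in_itv /=; case: eqP => [->|_]; first by rewrite yi1 lexx.
  by rewrite -ler_norml.
have [f Hf] := choice Hi.
pose S := \sum_i (f i)^-1.
have S0 : 0 <= S by apply: sumr_ge0 => i _; rewrite invr_ge0; exact/ltW/(Hf i).1.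
exists (p%:R * S + 1); split.
  by apply: ltr_pwDr => //; apply: mulr_ge0.
move=> y; have q0 := posdef_ge0 y PM.
have [->|y0] := eqVneq y 0.
  rewrite /sq big1 => [|i _]; last by rewrite mxE expr0n.
  apply: mulr_ge0; last exact: posdef_ge0.
  by apply: addr_ge0 => //; apply: mulr_ge0.
have [i0 yi0] : exists i0, y i0 ord0 != 0.
  have [//|H] := pselect (exists i0, y i0 ord0 != 0).
  exfalso; move/eqP: y0; apply; apply/matrixP => a b.
  rewrite (ord1 b) mxE; apply/eqP/negPn/negP => hab; apply: H; by exists a.
case: (@arg_maxP _ R _ i0 xpredT (fun j => `|y j ord0|) isT) => i _ Hmax.
set a := y i ord0.
have a0 : a != 0.
  by rewrite -normr_gt0; apply: lt_le_trans (Hmax i0 isT); rewrite normr_gt0.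
have H1 : f i <= qf M (a^-1 *: y).
  apply: (Hf i).2; first by rewrite mxE mulVf.
  move=> j; rewrite mxE normrM normfV ler_pdivrMl ?normr_gt0 // mulr1.
  exact: Hmax.
rewrite qfZ in H1.
have fi0 := (Hf i).1.
have Hsq : sq y <= p%:R * a ^+ 2.
  apply: (@le_trans _ _ (\sum_(j < p) a ^+ 2)); last first.
    by rewrite sumr_const card_ord mulr_natl.
  rewrite /sq; apply: ler_sum => j _.
  have hj : `|y j ord0| <= `|a| := Hmax j isT.
  rewrite -(real_normK (num_real a)) -(real_normK (num_real (y j ord0))).
  move: hj (normr_ge0 (y j ord0)); set u := `|y j ord0|; set v := `|a| => hj hu; nra.
have Hinv : (f i)^-1 <= S.
  rewrite /S (bigD1 i) //= lerDl; apply: sumr_ge0 => j _.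
  rewrite invr_ge0; exact/ltW/(Hf j).1.
have Ha2 : a ^+ 2 <= qf M y * (f i)^-1.
  rewrite ler_pdivlMr //.
  have : a ^+ 2 * f i <= a ^+ 2 * (a^-1 ^+ 2 * qf M y).
    by apply: ler_wpM2l => //; exact: sqr_ge0.
  by rewrite mulrA -exprMn mulfV // expr1n mul1r.
have pS : 0 <= p%:R :> R by [].
apply: (le_trans Hsq).
have h2 : p%:R * a ^+ 2 <= p%:R * (qf M y * S).
  apply: ler_wpM2l => //; apply: (le_trans Ha2); exact: ler_wpM2l.
apply: (le_trans h2); rewrite mulrDl mul1r -mulrA [S * _]mulrC.
by rewrite lerDl.
Qed.
End Alg.

Section Main.
Variables (R : realType) (n m : nat)
  (A : 'M[R]_n) (B : 'M[R]_(n, m)) (Q : 'M[R]_n) (Rw : 'M[R]_m)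
  (alpha : R) (Pt : 'M[R]_n)
  (x0 : 'cV[R]_n) (t : nat -> R) (F : nat -> 'M[R]_(m, n)) (x : R -> 'cV[R]_n).
Hypotheses (PQ : posdef Q) (PR : posdef Rw) (Ha : 1 < alpha) (PP : posdef Pt)
  (t0 : t 0%N = 0) (tinc : forall k, t k < t k.+1) (tinf : t @ \oo --> +oo)
  (x00 : x 0 = x0)
  (xc : forall k (i : 'I_n), {within `[t k, t k.+1], continuous (fun s => x s i ord0)})
  (xd : forall k (s : R), t k < s < t k.+1 -> forall i : 'I_n,
     is_derive s 1 (fun r => x r i ord0) ((A *m x s + B *m (F k *m x (t k))) i ord0))
  (feas : forall k, P1_feasible Q Rw Pt alpha x (F k) (t k) (t k.+1 - t k)).

Let u k := F k *m x (t k).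
Let V s := qf Pt (x s).
Let Vk k := V (t k).
Let J k xi := Jk Q Rw x (u k) (t k) xi.

Let a0 : 0 < alpha. Proof. by apply: lt_trans Ha. Qed.

Lemma J_ge0 k xi : (0 <= J k xi)%E.
Proof.
apply: integral_ge0 => s _; rewrite lee_fin.
by apply: addr_ge0; apply: posdef_ge0.
Qed.

Lemma V_le k xi : 0 <= xi <= t k.+1 - t k -> V (t k + xi) <= Vk k.
Proof.
move=> hxi; have := feas hxi; move/(le_trans (J_ge0 k xi)).
rewrite lee_fin pmulr_rge0 // subr_ge0 //.
Qed.

Lemma tk1 k : t k + (t k.+1 - t k) = t k.+1.
Proof. by rewrite addrC subrK. Qed.

Lemma Vk_step k : Vk k.+1 <= Vk k.
Proof.
have := @V_le k (t k.+1 - t k); rewrite tk1; apply.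
by rewrite lexx subr_ge0 ltW.
Qed.

Lemma Vk_le0 k : Vk k <= qf Pt x0.
Proof.
elim: k => [|k IH]; first by rewrite /Vk /V t0 x00.
exact: le_trans (Vk_step k) IH.
Qed.

Lemma V_ge0 s : 0 <= V s.
Proof. exact: posdef_ge0. Qed.

Lemma t_le i j : (i <= j)%N -> t i <= t j.
Proof.
move=> /subnK <-; elim: (j - i)%N => [|d IH]; first by rewrite add0n.
by rewrite addSn; apply: le_trans IH (ltW (tinc _)).
Qed.

Lemma t_ge0 k : 0 <= t k.
Proof. by rewrite -t0; apply: t_le. Qed.

Lemma t_big s : exists N, s < t N.
Proof.
have := (cvgryPge _).1 tinf (s + 1); case => N _ HN.
exists N; apply: lt_le_trans (HN N (leqnn N)); by rewrite ltrDl.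
Qed.

Lemma cover s : 0 <= s -> exists k, t k <= s < t k.+1.
Proof.
move=> s0; have [N HN] := t_big s.
elim: N HN => [|N IH] HN; first by move: HN; rewrite t0 => /(le_lt_trans s0); rewrite ltxx.
have [lt|ge] := ltP s (t N); first exact: IH.
by exists N; rewrite ge HN.
Qed.

Lemma concl1 s : 0 <= s -> qf Pt (x s) <= qf Pt x0.
Proof.
move=> /cover [k /andP [h1 h2]].
have e : t k + (s - t k) = s by rewrite addrC subrK.
have := @V_le k (s - t k); rewrite e => H.
apply: le_trans (Vk_le0 k); apply: H.
by rewrite subr_ge0 h1 /= lerD2r ltW.
Qed.

Lemma Jsum N : (\sum_(0 <= k < N) J k (t k.+1 - t k) <= (alpha * (Vk 0 - Vk N))%:E)%E.
Proof.
elim: N => [|N IH]; first by rewrite big_geq // subrr mulr0.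
rewrite big_nat_recr //=.
have := @feas N (t N.+1 - t N); rewrite tk1 => HN.
have HN' : (J N (t N.+1 - t N) <= (alpha * (Vk N - Vk N.+1))%:E)%E.
  by apply: HN; rewrite lexx subr_ge0 ltW.
apply: le_trans (leeD IH HN') _.
by rewrite -EFinD lee_fin -mulrDr addrA subrK.
Qed.


Lemma Jtot_ge0 : (0 <= Jtot Q Rw x F t)%E.
Proof. by apply: nneseries_ge0 => k _ _; exact: J_ge0. Qed.

Lemma Jtot_le : (Jtot Q Rw x F t <= (alpha * qf Pt x0)%:E)%E.
Proof.
rewrite /Jtot; apply: lime_le.
  by apply: is_cvg_nneseries => k _ _; exact: J_ge0.
apply: nearW => N; apply: le_trans (Jsum N) _.
rewrite lee_fin ler_wpM2l ?(ltW a0) // /Vk /V t0 x00 lerBlDr lerDl.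
exact: posdef_ge0.
Qed.

Lemma concl_nu : x0 != 0 -> (nu Q Rw Pt x F t x0 <= (alpha - 1)%:E)%E.
Proof.
move=> nz; have V0 : 0 < qf Pt x0 by apply: PP.2.
have Jf : Jtot Q Rw x F t \is a fin_num.
  rewrite ge0_fin_numE ?Jtot_ge0 //; apply: le_lt_trans Jtot_le _; exact: ltey.
have := Jtot_le; rewrite /nu -(fineK Jf) lee_fin => Hle.
rewrite -EFinB -EFinM lee_fin ler_pdivrMr //.
move: Hle; set j := fine _ => Hle; lra.
Qed.

Lemma wcont_sum (D : set R) k (G : 'I_k -> R -> R) :
  (forall i, {within D, continuous (G i)}) ->
  {within D, continuous (fun r => \sum_(i < k) G i r)}.
Proof. exact: (@cont_sum R (subspace D) k G). Qed.

Lemma wcont_mul (D : set R) (f g : R -> R) :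
  {within D, continuous f} -> {within D, continuous g} ->
  {within D, continuous (fun r => f r * g r)}.
Proof. exact: (@cont_mul R (subspace D) f g). Qed.

Lemma wcont_add (D : set R) (f g : R -> R) :
  {within D, continuous f} -> {within D, continuous g} ->
  {within D, continuous (fun r => f r + g r)}.
Proof. exact: (@cont_add R (subspace D) f g). Qed.

Lemma wcont_cst (D : set R) (c : R) : {within D, continuous (fun _ : R => c)}.
Proof. exact: (@cst_continuous (subspace D) R c). Qed.

Lemma wmeas (D : set R) (f : R -> R) : measurable D ->
  {within D, continuous f} -> measurable_fun D (EFin \o f).
Proof.
move=> mD cf; apply/(measurable_EFinP D f).
exact: (@subspace_continuous_measurable_fun R D f).
Qed.

Lemma xcW k a b i : t k <= a -> b <= t k.+1 ->
  {within `[a, b], continuous (fun s => x s i ord0)}.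
Proof.
move=> ha hb; have := @xc k i; apply: continuous_subspaceW.
move=> r /=; rewrite !in_itv /= => /andP[h1 h2].
by rewrite (le_trans ha h1) (le_trans h2 hb).
Qed.

Definition fD k r := 2 * \sum_i x r i ord0 * ((A *m x r) i ord0 + (B *m u k) i ord0).
Definition gk k r := qf Q (x r) + qf Rw (u k).
Definition h r := sq (x r).

Lemma cont_fD k a b : t k <= a -> b <= t k.+1 -> {within `[a, b], continuous (fD k)}.
Proof.
move=> ha hb; apply: wcont_mul; first exact: wcont_cst.
apply: wcont_sum => i; apply: wcont_mul; first exact: xcW ha hb.
apply: wcont_add; last exact: wcont_cst.
rewrite (_ : (fun r => _) = (fun r => \sum_j A i j * x r j ord0)); last first.
  by apply/funext => r; rewrite mulvE.
apply: wcont_sum => j; apply: wcont_mul; first exact: wcont_cst.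
exact: xcW ha hb.
Qed.

Lemma cont_h k a b : t k <= a -> b <= t k.+1 -> {within `[a, b], continuous h}.
Proof.
move=> ha hb; apply: wcont_sum => i.
rewrite (_ : (fun r => _) = fun r => x r i ord0 * x r i ord0); last first.
  by apply/funext => r; rewrite expr2.
exact: wcont_mul (xcW ha hb) (xcW ha hb).
Qed.

Lemma cont_g k a b : t k <= a -> b <= t k.+1 -> {within `[a, b], continuous (gk k)}.
Proof.
move=> ha hb; apply: wcont_add; last exact: wcont_cst.
rewrite (_ : (fun r => _) = (fun r => \sum_i \sum_j x r i ord0 * Q i j * x r j ord0)); last first.
  by apply/funext => r; rewrite qfE.
apply: wcont_sum => i; apply: wcont_sum => j; apply: wcont_mul; last exact: xcW ha hb.
apply: wcont_mul; [exact: xcW ha hb | exact: wcont_cst].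
Qed.

Variables (KQ KR : R).
Hypotheses (KQ0 : 0 < KQ) (KR0 : 0 < KR)
  (hQ : forall y, sq y <= KQ * qf Q y) (hR : forall y, sq y <= KR * qf Rw y).

Definition MA := \sum_i \sum_j `|A i j|.
Definition MB := \sum_i \sum_j `|B i j|.
Definition Cst := (4 * MA + 2 * MB) * (KQ + KR).

Lemma Cst_ge0 : 0 <= Cst.
Proof.
have MA0 : 0 <= MA by apply: sumr_ge0 => i _; apply: sumr_ge0.
have MB0 : 0 <= MB by apply: sumr_ge0 => i _; apply: sumr_ge0.
apply: mulr_ge0; first by apply: addr_ge0; apply: mulr_ge0.
by apply: addr_ge0; apply: ltW.
Qed.

Lemma fD_bound k r : `|fD k r| <= Cst * gk k r.
Proof.
rewrite /fD /gk /Cst; set X := x r; set U := u k.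
have e : \sum_i X i ord0 * ((A *m X) i ord0 + (B *m U) i ord0) =
  \sum_i X i ord0 * (A *m X) i ord0 + \sum_i X i ord0 * (B *m U) i ord0.
  by rewrite -big_split; apply: eq_bigr => i _; rewrite mulrDr.
rewrite e.
have h1 := bil_bound A X X; have h2 := bil_bound B X U.
rewrite -/MA in h1; rewrite -/MB in h2.
have MA0 : 0 <= MA by apply: sumr_ge0 => i _; apply: sumr_ge0.
have MB0 : 0 <= MB by apply: sumr_ge0 => i _; apply: sumr_ge0.
have sx := sq_ge0 X; have su := sq_ge0 U.
have hq := hQ X; have hr := hR U.
have q0 : 0 <= qf Q X := posdef_ge0 X PQ.
have r0 : 0 <= qf Rw U := posdef_ge0 U PR.
set S1 := \sum_i _ in h1; set S2 := \sum_i _ in h2.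
have hS : `|2 * (S1 + S2)| <= 2 * (MA * (sq X + sq X) + MB * (sq X + sq U)).
  rewrite normrM ger0_norm //; apply: ler_wpM2l => //.
  apply: le_trans (ler_normD _ _) _; exact: lerD.
apply: le_trans hS _.
have st2 : 2 * (MA * (sq X + sq X) + MB * (sq X + sq U)) <= (4 * MA + 2 * MB) * (sq X + sq U).
  nra.
apply: le_trans st2 _.
have c0 : 0 <= 4 * MA + 2 * MB by apply: addr_ge0; apply: mulr_ge0.
have st3 : (4 * MA + 2 * MB) * (sq X + sq U) <= (4 * MA + 2 * MB) * (KQ * qf Q X + KR * qf Rw U).
  by apply: ler_wpM2l => //; apply: lerD.
apply: le_trans st3 _; rewrite -mulrA; apply: ler_wpM2l => //.
have := ltW KQ0; have := ltW KR0; nra.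
Qed.

Lemma h_derive k r : t k < r < t k.+1 -> is_derive r 1 h (fD k r).
Proof.
move=> hr.
have -> : h = \sum_(i < n) ((fun s => x s i ord0) ^+ 2).
  rewrite fct_sumE; apply/funext => s; apply: eq_bigr => i _; by rewrite exprfctE.
have D i := is_deriveX 2 (@xd k r hr i).
apply: (is_derive_eq (is_derive_sum D)).
rewrite /fD mulr_sumr; apply: eq_bigr => i _.
by rewrite !mxE /= expr1 mulrA.
Qed.

Lemma h_ftc k s : t k < s <= t k.+1 ->
  (\int[lebesgue_measure]_(r in `[t k, s]) (fD k r)%:E = (h s)%:E - (h (t k))%:E)%E.
Proof.
move=> /andP[h1 h2]; apply: continuous_FTC2 => //.
- exact: cont_fD (lexx _) h2.
- have := cont_h (lexx (t k)) h2; move/(continuous_within_itvP _ h1) => [_ hl hr].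
  split => // r; rewrite in_itv /= => /andP[r1 r2].
  have hr' : t k < r < t k.+1 by rewrite r1 (lt_le_trans r2 h2).
  by case: (h_derive hr').
- move=> r; rewrite in_itv /= => /andP[r1 r2].
  have hr' : t k < r < t k.+1 by rewrite r1 (lt_le_trans r2 h2).
  by rewrite derive1E; case: (h_derive hr').
Qed.


Lemma Jfull k : J k (t k.+1 - t k) =
  (\int[lebesgue_measure]_(r in `[t k, t k.+1]) (gk k r)%:E)%E.
Proof. by rewrite /J /Jk tk1. Qed.

Lemma Jfull_le k : (J k (t k.+1 - t k) <= (alpha * (Vk k - Vk k.+1))%:E)%E.
Proof.
have := @feas k (t k.+1 - t k); rewrite tk1; apply.
by rewrite lexx subr_ge0 ltW.
Qed.

Lemma gk_ge0 k r : 0 <= gk k r.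
Proof. by apply: addr_ge0; apply: posdef_ge0. Qed.

Lemma cont_Cg k a b : t k <= a -> b <= t k.+1 ->
  {within `[a, b], continuous (fun r => Cst * gk k r)}.
Proof.
move=> ha hb.
exact: (@wcont_mul _ (fun _ => Cst) (gk k) (@wcont_cst _ Cst) (cont_g ha hb)).
Qed.

Lemma KL k s : t k <= s <= t k.+1 ->
  `|h s - h (t k)| <= Cst * (alpha * (Vk k - Vk k.+1)).
Proof.
move=> /andP[h1 h2].
have D0 : 0 <= Vk k - Vk k.+1 by rewrite subr_ge0 Vk_step.
have C0 := Cst_ge0.
case: (eqVneq s (t k)) => [->|ne].
  rewrite subrr normr0; apply: mulr_ge0 => //; apply: mulr_ge0 => //; exact: ltW.
have lt : t k < s by rewrite lt_neqAle eq_sym ne h1.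
have mI : measurable (`[t k, s]%classic : set R) by exact: measurable_itv.
have mI2 : measurable (`[t k, t k.+1]%classic : set R) by exact: measurable_itv.
have hs : t k < s <= t k.+1 by rewrite lt h2.
rewrite -lee_fin -abse_EFin EFinB -(h_ftc hs).
apply: le_trans (le_abse_integral lebesgue_measure mI (wmeas mI (cont_fD (lexx _) h2))) _.
apply: (@le_trans _ _ (\int[lebesgue_measure]_(r in `[t k, s]) (Cst * gk k r)%:E)%E).
  apply: ge0_le_integral => //.
  - exact: (measurableT_comp (@abse_measurable R setT) (wmeas mI (cont_fD (lexx _) h2))).
  - exact: (wmeas mI (cont_Cg (lexx _) h2)).
  - by move=> r _; rewrite abse_EFin lee_fin; exact: fD_bound.
apply: (@le_trans _ _ (\int[lebesgue_measure]_(r in `[t k, t k.+1]) (Cst * gk k r)%:E)%E).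
  apply: ge0_subset_integral => //.
  - exact: (wmeas mI2 (cont_Cg (lexx _) (lexx _))).
  - by move=> r _; rewrite lee_fin; apply: mulr_ge0 => //; exact: gk_ge0.
  - move=> r /=; rewrite !in_itv /= => /andP[r1 r2].
    by rewrite r1 (le_trans r2 h2).
rewrite (_ : (fun r => (Cst * gk k r)%:E) = (fun r => Cst%:E * (gk k r)%:E)%E); last first.
  by apply/funext => r; rewrite EFinM.
rewrite ge0_integralZl_EFin //; last first.
  - exact: (wmeas mI2 (cont_g (lexx _) (lexx _))).
  - by move=> r _; rewrite lee_fin; exact: gk_ge0.
have HJ := Jfull_le k; rewrite Jfull in HJ.
have C0E : (0 <= Cst%:E)%E by rewrite lee_fin.
rewrite EFinM; exact: (@lee_wpmul2l R Cst%:E C0E _ _ HJ).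
Qed.

Lemma LB k mv : 0 <= mv -> (forall s, t k <= s <= t k.+1 -> mv <= h s) ->
  mv / KQ * (t k.+1 - t k) <= alpha * (Vk k - Vk k.+1).
Proof.
move=> mv0 Hm.
have mI2 : measurable (`[t k, t k.+1]%classic : set R) by exact: measurable_itv.
rewrite -lee_fin; apply: le_trans (Jfull_le k); rewrite Jfull.
have e : ((mv / KQ * (t k.+1 - t k))%:E =
    \int[lebesgue_measure]_(r in `[t k, t k.+1]) (cst (mv / KQ)%:E) r)%E.
  have hm : lebesgue_measure (`[t k, t k.+1]%classic : set R) = ((t k.+1)%:E - (t k)%:E)%E.
    by rewrite lebesgue_measure_itv /= lte_fin tinc.
  rewrite integral_cst // EFinM; congr (_ * _)%E; rewrite EFinB; exact/esym/hm.
rewrite e; apply: ge0_le_integral => //.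
- by move=> r _; rewrite lee_fin divr_ge0 // ltW.
- exact: (wmeas mI2 (cont_g (lexx _) (lexx _))).
- move=> r; rewrite /= in_itv /= => hr; rewrite lee_fin /gk.
  have := Hm r hr; have := hQ (x r); rewrite -/(h r) => h1 h2.
  have := posdef_ge0 (u k) PR.
  rewrite ler_pdivrMr // => q20.
  apply: le_trans h2 _; apply: le_trans h1 _; rewrite mulrC.
  by apply: ler_wpM2r; [exact: ltW | rewrite lerDl].
Qed.

Definition K1 := Cst * alpha.

Lemma K1_ge0 : 0 <= K1.
Proof. by apply: mulr_ge0; [exact: Cst_ge0 | exact: ltW]. Qed.

Lemma KL' k s : t k <= s <= t k.+1 -> `|h s - h (t k)| <= K1 * Vk k - K1 * Vk k.+1.
Proof. by move=> hs; rewrite -mulrBr /K1 -mulrA; exact: KL. Qed.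

Lemma h_ge0 s : 0 <= h s.
Proof. exact: sq_ge0. Qed.

Lemma ev_nat (P : nat -> Prop) : (\forall k \near \oo, P k) -> exists N, forall k, (N <= k)%N -> P k.
Proof. by case => N _ HN; exists N => k Hk; apply: HN. Qed.

Lemma seq_lim : exists l, forall e, 0 < e -> exists N, forall k, (N <= k)%N ->
  `|l - h (t k)| < e /\ K1 * Vk k - K1 * Vk k.+1 < e.
Proof.
have Vni : nonincreasing_seq Vk by apply/nonincreasing_seqP => k; exact: Vk_step.
have Vlb : has_lbound (range Vk) by exists 0 => _ [k _ <-]; exact: V_ge0.
have cV := nonincreasing_cvgn Vni Vlb; set LV := inf _ in cV.
pose a k := h (t k) + K1 * Vk k.
have ani : nonincreasing_seq a.
  apply/nonincreasing_seqP => k; rewrite /a.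
  have H := KL' (s := t k.+1) (k := k); rewrite (ltW (tinc k)) lexx in H.
  have H2 := ler_norm (h (t k.+1) - h (t k)).
  have := H isT; lra.
have alb : has_lbound (range a).
  exists 0 => _ [k _ <-]; rewrite /a; apply: addr_ge0; first exact: h_ge0.
  apply: mulr_ge0; [exact: K1_ge0 | exact: V_ge0].
have cA := nonincreasing_cvgn ani alb; set LA := inf _ in cA.
exists (LA - K1 * LV) => e e0.
have K0 := K1_ge0.
have K10 : 0 < 1 + K1 by lra.
pose e' := e / (4 * (1 + K1)).
have e'0 : 0 < e' by apply: divr_gt0 => //; apply: mulr_gt0.
have [N1 HN1] := ev_nat ((cvgrPdist_lt _ _).1 cA e' e'0).
have [N2 HN2] := ev_nat ((cvgrPdist_lt _ _).1 cV e' e'0).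
exists (maxn N1 N2) => k; rewrite geq_max => /andP[k1 k2].
have hA := HN1 k k1; have hV := HN2 k k2; have hV' := HN2 k.+1 (leqW k2).
move: hA hV hV'; rewrite /a /=.
move=> /ltr_normlP [hA1 hA2] /ltr_normlP [hV1 hV2] /ltr_normlP [hW1 hW2].
have e'e : (1 + K1) * e' * 4 = e.
  by rewrite /e' mulrC mulrA mulrCA mulfV ?mulr1 // mulf_neq0 // gt_eqF.
have b1 : K1 * (LV - Vk k) <= K1 * e' by apply: ler_wpM2l => //; lra.
have b2 : - (K1 * e') <= K1 * (LV - Vk k) by rewrite -mulrN; apply: ler_wpM2l => //; lra.
have b3 : K1 * (LV - Vk k.+1) <= K1 * e' by apply: ler_wpM2l => //; lra.
have b4 : - (K1 * e') <= K1 * (LV - Vk k.+1) by rewrite -mulrN; apply: ler_wpM2l => //; lra.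
rewrite !mulrBr in b1 b2 b3 b4.
have Ke : K1 * e' * 2 < e by rewrite -e'e mulrDl mul1r; lra.
have Ke2 : e' * 2 < e.
  by rewrite -e'e mulrDl mul1r; have := mulr_ge0 K0 (ltW e'0); lra.
split; last by lra.
apply/ltr_normlP; split; lra.
Qed.

Lemma t_lt_le i j : t i < t j -> (i < j)%N.
Proof. by move=> H; rewrite ltnNge; apply/negP => /t_le; rewrite leNgt H. Qed.

Lemma sum_LB N c : 0 <= c -> (forall k, (N <= k)%N -> c * (t k.+1 - t k) <= alpha * (Vk k - Vk k.+1)) ->
  forall j, c * (t (N + j)%N - t N) <= alpha * (Vk N - Vk (N + j)%N).
Proof.
move=> c0 H; elim => [|j IH]; first by rewrite addn0 !subrr !mulr0.
rewrite addnS; have := H (N + j)%N (leq_addr _ _).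
move: IH; rewrite !mulrBr; lra.
Qed.

Lemma Z e : 0 < e -> exists K, forall k, (K <= k)%N -> forall s, t k <= s <= t k.+1 -> h s < e.
Proof.
have [l Hl] := seq_lim.
have V0 : 0 <= qf Pt x0 by exact: posdef_ge0.
have l0 : l = 0.
  apply/eqP; rewrite eq_le; apply/andP; split; last first.
    rewrite leNgt; apply/negP => ln.
    have ln' : 0 < - l by rewrite oppr_gt0.
    have [N HN] := Hl (- l) ln'.
    have [h1 _] := HN N (leqnn N).
    have := h_ge0 (t N); move: h1 => /ltr_normlP [h1 _]; lra.
  rewrite leNgt; apply/negP => lp.
  have l4 : 0 < l / 4 by rewrite divr_gt0.
  have [N HN] := Hl (l / 4) l4.
  pose c := l / 2 / KQ.
  have c0 : 0 < c by rewrite /c !divr_gt0.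
  have Hs : forall k, (N <= k)%N -> c * (t k.+1 - t k) <= alpha * (Vk k - Vk k.+1).
    move=> k Hk; rewrite /c; apply: LB; first by rewrite divr_ge0 // ltW.
    move=> s hs; have [h1 h2] := HN k Hk; have h3 := KL' hs.
    move: h1 => /ltr_normlP [h1 h1']; move: h3; rewrite ler_norml => /andP[h3 h3'].
    lra.
  have [M HM] := t_big (t N + alpha * qf Pt x0 / c).
  have NM : (N <= M)%N.
    apply/ltnW/t_lt_le; apply: le_lt_trans HM; rewrite lerDl.
    by apply: divr_ge0 => //; [apply: mulr_ge0 => //; exact: ltW | exact: ltW].
  have := sum_LB (ltW c0) Hs (M - N)%N; rewrite subnKC //.
  have := Vk_le0 N; have := V_ge0 (t M); rewrite -/(Vk M) => VM VN.
  have ec : alpha * qf Pt x0 / c * c = alpha * qf Pt x0 by rewrite mulfVK // gt_eqF.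
  move: HM; set q := alpha * qf Pt x0 / c => HM Hsum.
  have : c * q < c * (t M - t N) by rewrite ltr_pM2l // ltrBrDl.
  rewrite mulrC ec => H1.
  have : alpha * (Vk N - Vk M) <= alpha * qf Pt x0.
    by apply: ler_wpM2l; [exact: ltW | lra].
  lra.
subst l => e0.
have e2 : 0 < e / 2 by rewrite divr_gt0.
have [N HN] := Hl (e / 2) e2.
exists N => k Hk s hs; have [h1 h2] := HN k Hk; have h3 := KL' hs.
move: h1 => /ltr_normlP [h1 h1']; move: h3; rewrite ler_norml => /andP[h3 h3'].
lra.
Qed.

Lemma conv (i : 'I_n) : (fun s => x s i ord0) @ +oo --> 0.
Proof.
apply/cvgrPdist_lt => e e0.
have e20 : 0 < e ^+ 2 by rewrite exprn_gt0.
have [K HK] := Z e20.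
exists (t K); split; first exact: num_real.
move=> s Hs.
have s0 : 0 <= s by apply: le_trans (t_ge0 K) (ltW Hs).
have [k /andP[k1 k2]] := cover s0.
have Kk : (K <= k)%N by rewrite -ltnS; apply: t_lt_le; apply: lt_trans Hs k2.
have hs : t k <= s <= t k.+1 by rewrite k1 ltW.
have H1 := HK k Kk s hs.
have H2 := sq_term (x s) i.
rewrite sub0r normrN.
rewrite -(real_normK (num_real (x s i ord0))) in H2.
move: H1 H2 (normr_ge0 (x s i ord0)); rewrite /h.
set a := `|x s i ord0| => H1 H2 H3.
nra.
Qed.

Lemma main_result :
  ((forall s, 0 <= s -> qf Pt (x s) <= qf Pt x0) /\
   (forall i : 'I_n, (fun s => x s i ord0) @ +oo --> 0)) /\
  (x0 != 0 -> (nu Q Rw Pt x F t x0 <= (alpha - 1)%:E)%E).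
Proof.
split; first split.
- exact: concl1.
- exact: conv.
- exact: concl_nu.
Qed.

End Main.


Unset Implicit Arguments.

Theorem theorem2 (R : realType) (n m : nat)
  (A : 'M[R]_n) (B : 'M[R]_(n, m)) (Q : 'M[R]_n) (Rw : 'M[R]_m)
  (alpha gamma eta : R) (Ft : 'M[R]_(m, n)) (Pt : 'M[R]_n)
  (x0 : 'cV[R]_n) (t : nat -> R) (F : nat -> 'M[R]_(m, n)) (x : R -> 'cV[R]_n) :
  stabilizable A B ->
  posdef Q -> posdef Rw ->
  1 < alpha -> 0 <= gamma -> 0 <= eta ->
  hurwitz (A + B *m Ft) ->
  posdef Pt ->
  (A + B *m Ft)^T *m Pt + Pt *m (A + B *m Ft) + Q + Ft^T *m Rw *m Ft = 0 ->
  (* sampling instants 0 = t_0 < t_1 < ... , t_k -> +oo *)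
  t 0%N = 0 -> (forall k, t k < t k.+1) -> t @ \oo --> +oo ->
  (* x is the solution of dx/dt = A x + B u, x(0) = x0, u(s) = F_k x(t_k) on [t_k, t_{k+1}) *)
  x 0 = x0 ->
  (forall k (i : 'I_n), {within `[t k, t k.+1], continuous (fun s => x s i ord0)}) ->
  (forall k (s : R), t k < s < t k.+1 -> forall i : 'I_n,
     is_derive s 1 (fun r => x r i ord0) ((A *m x s + B *m (F k *m x (t k))) i ord0)) ->
  (* (F_k, delta_k) feasible for (P1) at every k *)
  (forall k, P1_feasible Q Rw Pt alpha x (F k) (t k) (t k.+1 - t k)) ->
  (* stabilizing: Lyapunov-stable (V nonincreasing bound) and x(t) -> 0 *)
  ((forall s, 0 <= s -> qf Pt (x s) <= qf Pt x0) /\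
   (forall i : 'I_n, (fun s => x s i ord0) @ +oo --> 0)) /\
  (x0 != 0 -> (nu Q Rw Pt x F t x0 <= (alpha - 1)%:E)%E).
Proof.
Proof.
move=> _ PQ PR Ha _ _ _ PP _ t0 tinc tinf x00 xc xd feas.
have [KQ [KQ0 hQ]] := coercive PQ.
have [KR [KR0 hR]] := coercive PR.
exact: (main_result PQ PR Ha PP t0 tinc tinf x00 xc xd feas KQ0 KR0 hQ hR).
Qed.
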